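(* Let $\mathcal F$ be a linear subspace of $C(\mathbf X)$ equipped with a norm $\|\cdot\|_{\mathcal F}$ making it a Banach space, and suppose $$L:=\limsup_{\epsilon\to0}\frac{\mathcal H_\epsilon(U_{\mathcal F})}{\log(1/\epsilon)}\in(0,\infty).$$ There exists a strategy for Predictor such that for every $F\in\mathcal F$ there is $N_0$ (depending on $F$ but not on Reality's moves) such that for all $N\ge N_0$ and all moves of Reality $$\sum_{n=1}^N(y_n-\mu_n)^2\le\sum_{n=1}^N(y_n-F(x_n))^2+CL\log N,$$ where $C$ is a universal constant.
   Context: Protocol: $\mathbf X$ a nonempty topological space; at each round $n$ Reality announces $x_n\in\mathbf X$, Predictor announces $\mu_n\in\mathbb R$, Reality announces $y_n\in[-1,1]$; a strategy for Predictor maps each history $(x_1,y_1,\dots,x_{n-1},y_{n-1},x_n)$ to $\mu_n$. $C(\mathbf X)$: bounded continuous real functions on $\mathbf X$ with supremum norm. $U_{\mathcal F}=\{F\in\mathcal F:\|F\|_{\mathcal F}\le1\}$. $\mathcal H_\epsilon(A)$: $\log_2$ of the minimal number of points of $A$ forming an $\epsilon$-net for $A$ in the supremum metric of $C(\mathbf X)$. $\log=\log_2$. *)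

(* Defs.v *)
(* with R := Stdlib's reals (a realType via Rstruct),
   so that the constant C is universal (does not depend on a choice of real field). *)
From HB Require Import structures.
From mathcomp Require Import all_boot all_order all_algebra.
From mathcomp Require Import all_classical all_reals all_analysis.
From mathcomp Require Import Rstruct Rstruct_topology.
Set Implicit Arguments. Unset Strict Implicit. Unset Printing Implicit Defensive.
Import Order.TTheory GRing.Theory Num.Theory.
Import numFieldNormedType.Exports.
Local Open Scope classical_set_scope.
Local Open Scope ring_scope.

Notation R := Rdefinitions.R.

Definition log2 (x : R) : R := ln x / ln 2.

Section Defs.
Variable X : topologicalType.

(* C(X): bounded continuous real functions on X *)
Definition bounded_continuous (f : X -> R) : Prop :=
  continuous f /\ exists M : R, forall x, `|f x| <= M.

Definition banach_subspace (F : set (X -> R)) (nF : (X -> R) -> R) : Prop :=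
  [/\ (forall f, F f -> bounded_continuous f),
      F (fun _ => 0) /\
      (forall f g, F f -> F g -> F (fun x => f x + g x)) /\
      (forall (a : R) f, F f -> F (fun x => a * f x)),
      (forall f, F f -> nF f = 0 -> f = (fun _ => 0)) /\
      (forall (a : R) f, F f -> nF (fun x => a * f x) = `|a| * nF f) /\
      (forall f g, F f -> F g -> nF (fun x => f x + g x) <= nF f + nF g) &
      forall u : nat -> X -> R, (forall n, F (u n)) ->
        (forall e : R, 0 < e -> exists N : nat, forall m n : nat,
           (N <= m)%N -> (N <= n)%N -> nF (fun x => u m x - u n x) < e) ->
        exists f, F f /\ forall e : R, 0 < e -> exists N : nat, forall n : nat,
           (N <= n)%N -> nF (fun x => u n x - f x) < e].

Definition unit_ball (F : set (X -> R)) (nF : (X -> R) -> R) : set (X -> R) :=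
  [set f | F f /\ nF f <= 1].

Definition is_net (A : set (X -> R)) (eps : R) (s : seq (X -> R)) : Prop :=
  (forall g, g \in s -> A g) /\
  forall f, A f -> exists2 g, g \in s & forall x, `|f x - g x| <= eps.

(* minimal number of points of A forming an eps-net of A (+oo if none finite) *)
Definition covnum (A : set (X -> R)) (eps : R) : \bar R :=
  ereal_inf [set (n%:R)%:E | n in [set n : nat | exists s, size s = n /\ is_net A eps s]].

Definition entropy (A : set (X -> R)) (eps : R) : \bar R :=
  match covnum A eps with
  | EFin n => (log2 n)%:E
  | +oo%E => +oo%E
  | -oo%E => -oo%E
  end.

Definition entropy_exponent (F : set (X -> R)) (nF : (X -> R) -> R) : \bar R :=
  limf_esup (fun eps : R => (entropy (unit_ball F nF) eps * (log2 (1 / eps))^-1%:E)%E)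
            (0 : R)^'+.

(* Predictor's forecast at round n+1 (0-indexed n), given the history of the
   first n rounds and the current object xs n *)
Definition forecast (strat : seq (X * R) -> X -> R) (xs : nat -> X) (ys : nat -> R)
  (n : nat) : R := strat [seq (xs i, ys i) | i <- iota 0 n] (xs n).

End Defs.

(* Main.v *)
Require Import Defs.
From HB Require Import structures.
From mathcomp Require Import all_boot all_order all_algebra.
From mathcomp Require Import all_classical all_reals all_analysis.
From mathcomp Require Import Rstruct Rstruct_topology.
From mathcomp Require Import ring lra zify.
From Stdlib Require Import Lia.
Import Order.TTheory GRing.Theory Num.Theory.
Import numFieldNormedType.Exports.
Local Open Scope classical_set_scope.
Local Open Scope ring_scope.
Set Implicit Arguments. Unset Strict Implicit. Unset Printing Implicit Defensive.
Definition clip (a : R) : R := if a < -1 then -1 else if 1 < a then 1 else a.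

Lemma clip_bnd a : -1 <= clip a <= 1.
Proof. rewrite /clip; case: ifP => h1; first lra. case: ifP => h2; first lra.
move: h1 h2; rewrite !ltNge => /negbFE h1 /negbFE h2; lra. Qed.

Lemma clip_lip a b : `|clip a - clip b| <= `|a - b|.
Proof.
rewrite /clip; case: ifP => h1; case: ifP => h2; try case: ifP => h3; try case: ifP => h4;
 move: h1 h2; try move: h3; try move: h4; rewrite ?ltNge;
 repeat (move/negbFE || move/negbT); rewrite -?ltNge; intros;
 rewrite ?subrr ?normr0 ?normr_ge0 //;
 repeat match goal with |- context [`| ?x |] => 
   let h := fresh in have [h|h] := lerP 0 x; [rewrite (ger0_norm h) | rewrite (ltr0_norm h)] end; lra.
Qed.

Lemma clip_sq y a : -1 <= y <= 1 -> (y - clip a) ^+ 2 <= (y - a) ^+ 2.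
Proof.
move=> hy; rewrite /clip; case: ifP => h1; first nra. case: ifP => h2; first nra. lra. Qed.
Definition eta : R := 32%:R^-1.

Lemma expR_le_inv (z : R) : z < 1 -> expR z <= (1 - z)^-1.
Proof.
move=> hz. have h1 := expR_ge1Dx (- z).
have hp : 0 < 1 - z by lra.
rewrite -[expR z]invrK lef_pV2 ?posrE ?expR_gt0 //.
rewrite -expRN; lra. by rewrite invr_gt0 expR_gt0.
Qed.

Lemma tangent (u v : R) : -2 <= u <= 2 -> -2 <= v <= 2 ->
  expR (- eta * v ^+ 2) <= expR (- eta * u ^+ 2) * (1 + u * (u - v) / 16%:R).
Proof.
move=> hu hv.
have -> : - eta * v ^+ 2 = - eta * u ^+ 2 + (u ^+ 2 - v ^+ 2) / 32%:R.
  by rewrite /eta; field.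
rewrite exp.expRD ler_pM2l ?expR_gt0 //.
set z := (u ^+ 2 - v ^+ 2) / 32%:R.
have hz : z < 1 by rewrite /z; nra.
apply: le_trans; first exact: (expR_le_inv hz).
have hp : 0 < 1 - z by lra.
rewrite -(ler_pM2l hp) mulfV ?gt_eqF //.
have key : (1 - z) * (1 + u * (u - v) / 16%:R) - 1 = (u - v) ^+ 2 * (1 / 32%:R - u * (u + v) / 512%:R).
  by rewrite /z; field.
have h8 : u * (u + v) <= 8%:R by nra.
have : 0 <= (u - v) ^+ 2 * (1 / 32%:R - u * (u + v) / 512%:R).
  apply: mulr_ge0; first by rewrite sqr_ge0. lra.
lra.
Qed.
Lemma wsum_bound (T : Type) (r : seq T) (w P : T -> R) :
  (forall t, 0 <= w t) -> (forall t, -1 <= P t <= 1) ->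
  - \sum_(t <- r) w t <= \sum_(t <- r) w t * P t <= \sum_(t <- r) w t.
Proof.
move=> hw hP; apply/andP; split.
  rewrite -sumrN; apply: ler_sum => t _; have := hw t; have := hP t; nra.
apply: ler_sum => t _; have := hw t; have := hP t; nra.
Qed.

Lemma wavg_bound (T : Type) (r : seq T) (w P : T -> R) :
  (forall t, 0 <= w t) -> (forall t, -1 <= P t <= 1) ->
  -1 <= (\sum_(t <- r) w t * P t) / (\sum_(t <- r) w t) <= 1.
Proof.
move=> hw hP; have /andP[h1 h2] := wsum_bound r hw hP.
set S := \sum_(t <- r) w t in h1 h2 *; set A := \sum_(t <- r) w t * P t in h1 h2 *.
have hS : 0 <= S by apply: sumr_ge0 => t _; exact: hw.
have [S0|Sp] := eqVneq S 0.
  by rewrite S0 invr0 mulr0; lra.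
have Sp' : 0 < S by rewrite lt_neqAle eq_sym Sp hS.
rewrite ler_pdivlMr // ler_pdivrMr //; lra.
Qed.

Lemma jensen (T : Type) (r : seq T) (w P : T -> R) (y : R) :
  (forall t, 0 <= w t) -> (forall t, -1 <= P t <= 1) -> -1 <= y <= 1 ->
  \sum_(t <- r) w t * expR (- eta * (y - P t) ^+ 2) <=
  expR (- eta * (y - (\sum_(t <- r) w t * P t) / (\sum_(t <- r) w t)) ^+ 2)
    * \sum_(t <- r) w t.
Proof.
move=> hw hP hy.
have hmu := wavg_bound r hw hP.
have /andP[h1 h2] := wsum_bound r hw hP.
set S := \sum_(t <- r) w t in h1 h2 hmu *.
set A := \sum_(t <- r) w t * P t in h1 h2 hmu *.
set mu := A / S in hmu *.
set e := expR (- eta * (y - mu) ^+ 2).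
have hS : 0 <= S by apply: sumr_ge0 => t _; exact: hw.
have AmS : A - mu * S = 0.
  have [S0|Sp] := eqVneq S 0.
    rewrite /mu S0 invr0 !mulr0 subr0; rewrite S0 in h1 h2; lra.
  by rewrite /mu divfK // subrr.
apply: (@le_trans _ _ (\sum_(t <- r) w t * (e * (1 + (y - mu) * ((y - mu) - (y - P t)) / 16%:R)))).
  apply: ler_sum => t _; apply: ler_wpM2l; first exact: hw.
  apply: tangent.
    by move: hmu hy; clear; move=> /andP[? ?] /andP[? ?]; apply/andP; split; lra.
  by move: (hP t) hy; clear; move=> /andP[? ?] /andP[? ?]; apply/andP; split; lra.
have -> : \sum_(t <- r) w t * (e * (1 + (y - mu) * ((y - mu) - (y - P t)) / 16%:R))
   = \sum_(t <- r) (e * w t + (e * (y - mu) / 16%:R) * (w t * P t - mu * w t)).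
  by apply: eq_bigr => t _; ring.
rewrite big_split /= -mulr_sumr -mulr_sumr sumrB -mulr_sumr -/S -/A AmS mulr0 addr0 mulrC.
by [].
Qed.
Record Alg (X : Type) := MkAlg {
  a_sz : nat -> nat; a_B : nat -> nat; a_E : nat -> nat -> X -> R; a_pri : nat -> nat -> R }.

Definition idx (sz : nat -> nat) (G : nat) : seq (nat * nat) :=
  [seq (m, i) | m <- iota 0 G, i <- iota 0 (sz m)].


Definition dh (X : Type) (a : Alg X) (xs : nat -> X) (ys mus : nat -> R) (p : nat * nat) (t : nat) : R :=
  \sum_(0 <= s < t) (if (p.1 < a_B a s)%N then
       (ys s - a_E a p.1 p.2 (xs s)) ^+ 2 - (ys s - mus s) ^+ 2 else 0).

Definition wt (X : Type) (a : Alg X) xs ys mus p t : R :=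
  a_pri a p.1 p.2 * expR (- eta * dh a xs ys mus p t).

Definition stepf (X : Type) (a : Alg X) (xs : nat -> X) (ys mus : nat -> R) (t : nat) : R :=
  (\sum_(p <- idx (a_sz a) (a_B a t)) wt a xs ys mus p t * a_E a p.1 p.2 (xs t))
  / (\sum_(p <- idx (a_sz a) (a_B a t)) wt a xs ys mus p t).

Fixpoint Aseq (X : Type) (a : Alg X) xs ys (n : nat) : seq R :=
  if n is n'.+1 then rcons (Aseq a xs ys n') (stepf a xs ys (nth 0 (Aseq a xs ys n')) n')
  else [::].

Definition mu (X : Type) (a : Alg X) xs ys n := stepf a xs ys (nth 0 (Aseq a xs ys n)) n.

Lemma size_Aseq X (a : Alg X) xs ys n : size (Aseq a xs ys n) = n.
Proof. by elim: n => [|n IH] //=; rewrite size_rcons IH. Qed.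

Lemma nth_Aseq X (a : Alg X) xs ys n s : (s < n)%N -> nth 0 (Aseq a xs ys n) s = mu a xs ys s.
Proof.
elim: n => [|n IH] // hs /=; rewrite nth_rcons size_Aseq.
have [hsn|hsn] := ltnP s n; first exact: IH.
have -> : s = n by apply/eqP; rewrite eqn_leq hsn -ltnS hs.
by rewrite eqxx.
Qed.

Lemma dh_ext X (a : Alg X) xs xs' ys ys' f g p t :
  (forall s, (s < t)%N -> xs s = xs' s) -> (forall s, (s < t)%N -> ys s = ys' s) ->
  (forall s, (s < t)%N -> f s = g s) -> dh a xs ys f p t = dh a xs' ys' g p t.
Proof.
move=> hx hy hf; apply: eq_big_nat => s /andP[_ hs].
by rewrite hx // hy // hf.
Qed.

Lemma stepf_ext X (a : Alg X) xs xs' ys ys' f g t :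
  (forall s, (s <= t)%N -> xs s = xs' s) -> (forall s, (s < t)%N -> ys s = ys' s) ->
  (forall s, (s < t)%N -> f s = g s) -> stepf a xs ys f t = stepf a xs' ys' g t.
Proof.
move=> hx hy hf; rewrite /stepf /wt.
have hd : forall p, dh a xs ys f p t = dh a xs' ys' g p t.
  move=> p; apply: dh_ext => //.
  by move=> s hs; exact: (hx s (ltnW hs)).
by congr (_ / _); apply: eq_bigr => p _; rewrite hd // hx.
Qed.

Lemma mu_fix X (a : Alg X) xs ys t : mu a xs ys t = stepf a xs ys (mu a xs ys) t.
Proof. by apply: stepf_ext => // s hs; rewrite nth_Aseq. Qed.

Lemma Aseq_ext X (a : Alg X) xs xs' ys ys' n :
  (forall s, (s < n)%N -> xs s = xs' s) -> (forall s, (s < n)%N -> ys s = ys' s) ->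
  Aseq a xs ys n = Aseq a xs' ys' n.
Proof.
elim: n => [|n IH] hx hy //=.
rewrite IH; last 2 first.
- by move=> s hs; apply: hx; apply: ltnW.
- by move=> s hs; apply: hy; apply: ltnW.
congr rcons; apply: stepf_ext.
- by move=> s hs; apply: hx; rewrite ltnS.
- by move=> s hs; apply: hy; apply: ltnW.
- by [].
Qed.

Lemma mu_ext X (a : Alg X) xs xs' ys ys' n :
  (forall s, (s <= n)%N -> xs s = xs' s) -> (forall s, (s < n)%N -> ys s = ys' s) ->
  mu a xs ys n = mu a xs' ys' n.
Proof.
move=> hx hy; rewrite /mu (Aseq_ext a (xs' := xs') (ys' := ys')) //.
  by apply: stepf_ext.
by move=> s hs; apply: hx; apply: ltnW.
Qed.
Lemma idx_restr (sz : nat -> nat) (k G : nat) (F : nat * nat -> R) : (k <= G)%N ->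
  \sum_(p <- idx sz G | (p.1 < k)%N) F p = \sum_(p <- idx sz k) F p.
Proof.
move=> hkG; rewrite big_mkcond /idx !big_allpairs_dep /=.
rewrite -(subnKC hkG) iotaD big_cat /= add0n.
have -> : \sum_(i <- iota k (G - k))
    \sum_(i2 <- iota 0 (sz i)) (if (i < k)%N then F (i, i2) else 0) = 0.
  rewrite big_seq; apply: big1 => m; rewrite mem_iota => /andP[h1 _]; apply: big1 => i _.
  by rewrite ltnNge h1.
rewrite addr0.
rewrite big_seq_cond [RHS]big_seq_cond; apply: eq_bigr => m /andP[hm _].
by apply: eq_bigr => i _; move: hm; rewrite mem_iota add0n => /andP[_ ->].
Qed.

Definition Psi X (a : Alg X) xs ys G n : R :=
  \sum_(p <- idx (a_sz a) G) a_pri a p.1 p.2 * expR (- eta * dh a xs ys (mu a xs ys) p n).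

Definition alg_ok X (a : Alg X) :=
  (forall m i, 0 <= a_pri a m i) /\ (forall m i x, -1 <= a_E a m i x <= 1).

Lemma mu_bound X (a : Alg X) xs ys t : alg_ok a -> -1 <= mu a xs ys t <= 1.
Proof.
move=> [hp hE]; rewrite mu_fix /stepf; apply: wavg_bound.
  by move=> p; rewrite /wt mulr_ge0 ?expR_ge0.
by move=> p; exact: hE.
Qed.

Lemma psi_step X (a : Alg X) xs ys G n : alg_ok a -> (forall t, -1 <= ys t <= 1) ->
  (a_B a n <= G)%N -> Psi a xs ys G n.+1 <= Psi a xs ys G n.
Proof.
move=> [hp hE] hy hBG.
set M := mu a xs ys.
set la := (ys n - M n) ^+ 2.
pose le (p : nat * nat) := (ys n - a_E a p.1 p.2 (xs n)) ^+ 2.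
pose w p := wt a xs ys M p n.
have -> : Psi a xs ys G n.+1 = \sum_(p <- idx (a_sz a) G)
    (if (p.1 < a_B a n)%N then w p * expR (- eta * le p) * expR (eta * la) else w p).
  apply: eq_bigr => p _; rewrite /dh big_nat_recr //= -/(dh a xs ys M p n) /w /wt /le /la.
  case: ifP => _; last by rewrite addr0.
  rewrite -!mulrA -!exp.expRD; congr (_ * expR _). by rewrite /M; ring.
rewrite /Psi (bigID (fun p : nat * nat => (p.1 < a_B a n)%N)) /=.
rewrite [X in _ <= X](bigID (fun p : nat * nat => (p.1 < a_B a n)%N)) /=.
apply: lerD; last first.
  by apply: ler_sum => p; move/negbTE => ->.
rewrite (eq_bigr (fun p => w p * expR (- eta * le p) * expR (eta * la))); last first.
  by move=> p ->.
rewrite !idx_restr //.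
rewrite -mulr_suml.
have hj := jensen (idx (a_sz a) (a_B a n)) (w := w) (P := fun p => a_E a p.1 p.2 (xs n)) (y := ys n).
have hj' := hj (fun p => mulr_ge0 (hp _ _) (expR_ge0 _)) (fun p => hE _ _ _) (hy n).
rewrite -/(stepf a xs ys M n) -mu_fix in hj'.
rewrite /le; apply: le_trans (ler_wpM2r (expR_ge0 _) hj') _.
rewrite mulrAC -exp.expRD /la mulNr addNr exp.expR0 mul1r.
by [].
Qed.
Lemma psi0 X (a : Alg X) xs ys G : Psi a xs ys G 0 = \sum_(p <- idx (a_sz a) G) a_pri a p.1 p.2.
Proof.
by apply: eq_bigr => p _; rewrite /dh big_geq // mulr0 exp.expR0 mulr1.
Qed.

Lemma psi_bound X (a : Alg X) xs ys G N : alg_ok a -> (forall t, -1 <= ys t <= 1) ->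
  (forall G', \sum_(p <- idx (a_sz a) G') a_pri a p.1 p.2 <= 1) ->
  {homo a_B a : s t / (s <= t)%N >-> (s <= t)%N} ->
  (a_B a N <= G)%N -> Psi a xs ys G N <= 1.
Proof.
move=> ok hy hpr hB hBG.
suff : forall n, (n <= N)%N -> Psi a xs ys G n <= 1 by apply.
elim => [|n IH] hn; first by rewrite psi0.
apply: le_trans (IH (ltnW hn)).
apply: psi_step => //.
by apply: leq_trans hBG; apply: hB; apply: ltnW.
Qed.

Lemma regret X (a : Alg X) xs ys G N m i : alg_ok a -> (forall t, -1 <= ys t <= 1) ->
  (forall G', \sum_(p <- idx (a_sz a) G') a_pri a p.1 p.2 <= 1) ->
  {homo a_B a : s t / (s <= t)%N >-> (s <= t)%N} ->
  (a_B a N <= G)%N -> (m < G)%N -> (i < a_sz a m)%N -> 0 < a_pri a m i ->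
  \sum_(0 <= t < N) (ys t - mu a xs ys t) ^+ 2 <=
  \sum_(0 <= t < N) (ys t - a_E a m i (xs t)) ^+ 2
  + 4%:R * \sum_(0 <= t < N) (if (m < a_B a t)%N then 0 else 1)
  - ln (a_pri a m i) / eta.
Proof.
move=> ok hy hpr hB hBG hmG hi hpos.
have hP := psi_bound xs ok hy hpr hB hBG.
set d := dh a xs ys (mu a xs ys) (m, i) N.
have hterm : a_pri a m i * expR (- eta * d) <= 1.
  apply: le_trans hP; rewrite /Psi.
  have hin : (m, i) \in idx (a_sz a) G.
    by apply: (@allpairs_f_dep nat (fun _ => nat) _ (fun m i => (m, i))); rewrite mem_iota /= ?add0n ?hmG ?hi.
  rewrite (big_rem _ hin) /= lerDl; apply: sumr_ge0 => p _.
  by rewrite mulr_ge0 ?expR_ge0 //; case: ok.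
have hd : - eta * d <= - ln (a_pri a m i).
  have h2 : expR (- eta * d) <= (a_pri a m i)^-1.
    by rewrite -(ler_pM2l hpos) mulfV ?gt_eqF.
  have := h2; rewrite -(ler_ln) ?posrE ?expR_gt0 ?invr_gt0 // exp.expRK lnV ?posrE //.
have heta : 0 < eta by rewrite /eta invr_gt0 ltr0n.
have hd' : - d <= - ln (a_pri a m i) / eta.
  rewrite ler_pdivlMr //; move: hd; rewrite mulNr mulrC -mulNr; lra.
apply: le_trans (_ : \sum_(0 <= t < N) ((ys t - a_E a m i (xs t)) ^+ 2
   + 4%:R * (if (m < a_B a t)%N then 0 else 1)
   - (if ((m, i).1 < a_B a t)%N then (ys t - a_E a (m, i).1 (m, i).2 (xs t)) ^+ 2
        - (ys t - mu a xs ys t) ^+ 2 else 0)) <= _).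
  apply: ler_sum => t _ /=.
  case: ifP => _; first lra.
  have := mu_bound xs ys t ok; have := hy t.
  have := sqr_ge0 (ys t - a_E a m i (xs t)).
  move=> h0 /andP[? ?] /andP[? ?]; nra.
rewrite sumrB big_split /= -mulr_sumr.
rewrite [X in _ - X <= _](_ : _ = d) //.
lra.
Qed.
Definition epsk (k : nat) : R := (2%:R ^+ k)^-1.

Lemma epsk_gt0 k : 0 < epsk k.
Proof. by rewrite /epsk invr_gt0 exprn_gt0. Qed.

Lemma ln2_gt0 : 0 < ln (2%:R : R).
Proof. by apply: ln_gt0; rewrite ltr1n. Qed.

Lemma log2_epsk k : log2 (1 / epsk k) = k%:R.
Proof.
rewrite /log2 /epsk div1r invrK lnXn ?ltr0n // -mulr_natr.
have h := ln2_gt0. by field; rewrite mul1r gt_eqF.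
Qed.

Lemma net_exists (X : topologicalType) (F : set (X -> R)) (nF : (X -> R) -> R) (L : R) :
  0 < L -> (entropy_exponent F nF < (2 * L)%:E)%E ->
  exists k0 : nat, forall k, (k0 <= k)%N ->
    exists s, is_net (unit_ball F nF) (epsk k) s /\ ln (size s)%:R <= 2 * L * (k%:R * ln 2).
Proof.
move=> L0 hE.
rewrite /entropy_exponent /limf_esup in hE.
have [_ [V hV <-] hlt] := ereal_inf_lt hE.
move: hV => /nbhs_norm0P [e /= e0 he].
exists (Num.truncn e^-1).+1 => k hk.
have k0 : (0 < k)%N by apply: leq_trans hk.
have hkr : e^-1 < k%:R.
  apply: lt_le_trans (truncnS_gt _) _; by rewrite ler_nat.
have hVk : V (epsk k).
  apply: he; last exact: epsk_gt0.
  rewrite /= ger0_norm ?ltW ?epsk_gt0 // /epsk -[e]invrK ltf_pV2 ?posrE ?invr_gt0 ?exprn_gt0 //.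
  apply: lt_trans hkr _; rewrite -natrX ltr_nat; exact: ltn_expl.
have hg := le_lt_trans (ereal_sup_ubound (ex_intro2 _ _ _ hVk erefl)) hlt.
rewrite /= log2_epsk in hg.
have hc0 : (0 <= covnum (unit_ball F nF) (epsk k))%E.
  rewrite /covnum; apply: le_ereal_inf_tmp => y [n _ <-]; by rewrite lee_fin ler0n.
have kp : 0 < (k%:R : R) by rewrite ltr0n.
set B := 2 * L * (k%:R * ln 2).
have Bp : 0 < B by rewrite /B !mulr_gt0 // ln2_gt0.
move: hg hc0; rewrite /entropy.
case hc: (covnum (unit_ball F nF) (epsk k)) => [c| |] hg hc0; last first.
- by [].
- by rewrite gt0_mulye ?lte_fin ?invr_gt0 // in hg.
rewrite -EFinM lte_fin in hg.
have hlnc : ln c < B.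
  move: hg; rewrite /log2 ltr_pdivrMr // /B => h.
  have := ln2_gt0 => h2.
  by rewrite ltr_pdivrMr // in h; rewrite !mulrA.
have hcB : (covnum (unit_ball F nF) (epsk k) < (expR B)%:E)%E.
  rewrite hc lte_fin.
  have [c0|c0] := lerP c 0; first by apply: le_lt_trans c0 (expR_gt0 _).
  by rewrite -(lnK (x := c)) ?posrE // ltr_expR.
have [y [n [s [hs hnet]] <-] hy] := ereal_inf_lt hcB.
exists s; split => //.
rewrite hs; rewrite lte_fin in hy.
have [n0|n0] := eqVneq n 0%N.
  by rewrite n0; apply: le_trans (ln_le0 _) (ltW Bp); rewrite ler01.
apply: ltW; rewrite -[X in _ < X](expRK B) ltr_ln ?posrE ?expR_gt0 // ?ltr0n ?lt0n. all: try exact: n0. all: match goal with |- ?g => idtac g end.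
Qed.
Lemma count_lt (x : R) N : 0 <= x ->
  \sum_(0 <= t < N) (if t%:R < x then 1 else 0 : R) <= x + 1.
Proof.
move=> x0.
have hle : forall n, \sum_(0 <= t < n) (if t%:R < x then 1 else 0 : R) <= n%:R.
  elim => [|n IH]; first by rewrite big_geq.
  rewrite big_nat_recr //= -natr1; apply: lerD => //; case: ifP => _ //; lra.
elim: N => [|n IH]; first by rewrite big_geq //; lra.
rewrite big_nat_recr //=; case: ifP => h; last by rewrite addr0.
have := hle n; lra.
Qed.

Lemma geom_sum (q : R) G : \sum_(0 <= m < G) (1 - q) * q ^+ m = 1 - q ^+ G.
Proof.
elim: G => [|G IH]; first by rewrite big_geq // expr0 subrr.
by rewrite big_nat_recr //= IH exprS; ring.
Qed.

Lemma prior_sum (sz : nat -> nat) (q : R) G : 0 <= q <= 1 ->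
  \sum_(p <- idx sz G) ((1 - q) * q ^+ p.1 / (sz p.1)%:R) <= 1.
Proof.
move=> /andP[q0 q1].
rewrite /idx big_allpairs_dep /=.
have -> : iota 0 G = index_iota 0 G by rewrite /index_iota subn0.
apply: (@le_trans _ _ (\sum_(0 <= m < G) (1 - q) * q ^+ m)); last first.
  rewrite geom_sum; have : 0 <= q ^+ G by rewrite exprn_ge0. lra.
apply: ler_sum => m _.
have -> : iota 0 (sz m) = index_iota 0 (sz m) by rewrite /index_iota subn0.
rewrite sumr_const_nat subn0.
have hc : 0 <= (1 - q) * q ^+ m by rewrite mulr_ge0 ?exprn_ge0 //; lra.
have [->|sz0] := eqVneq (sz m) 0%N; first by rewrite mulr0n.
have h : forall (c : R) (n : nat), (0 < n)%N -> c / (n%:R) *+ n = c.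
  by move=> c n hn; rewrite -mulr_natr divfK // pnatr_eq0 -lt0n.
by rewrite h // lt0n.
Qed.

Lemma clip_diff (y a b : R) : -1 <= y <= 1 ->
  (y - clip a) ^+ 2 <= (y - clip b) ^+ 2 + 4%:R * `|a - b|.
Proof.
move=> hy; have := clip_lip a b; have := clip_bnd a; have := clip_bnd b.
move: hy => /andP[y1 y2] /andP[b1 b2] /andP[a1 a2].
have [h|h] := lerP 0 (clip a - clip b).
  rewrite (ger0_norm h) => hl. nra.
rewrite (ltr0_norm h) => hl. nra.
Qed.
Definition netP (X : topologicalType) (F : set (X -> R)) (nF : (X -> R) -> R) (L : R) (k : nat)
  (s : seq (X -> R)) : Prop :=
  is_net (unit_ball F nF) (epsk k) s /\ ln (size s)%:R <= 2 * L * (k%:R * ln 2).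

Definition netk (X : topologicalType) (F : set (X -> R)) (nF : (X -> R) -> R) (L : R) (k : nat)
  : seq (X -> R) :=
  match pselect (exists s, netP F nF L k s) with
  | left h => proj1_sig (cid h) | right _ => [::] end.

Lemma netk_spec (X : topologicalType) (F : set (X -> R)) (nF : (X -> R) -> R) (L : R) (k : nat) :
  (exists s, netP F nF L k s) -> netP F nF L k (netk F nF L k).
Proof.
move=> h; rewrite /netk; case: pselect => // h'.
by case: (cid h').
Qed.

Definition mkalg (X : topologicalType) (F : set (X -> R)) (nF : (X -> R) -> R) (L : R) : Alg X :=
  MkAlg (fun m => size (netk F nF L (2 * m)))
    (fun t => Num.truncn (t%:R / L))
    (fun m i x => clip (2%:R ^+ m * nth (fun _ => 0) (netk F nF L (2 * m)) i x))
    (fun m i => (1 - expR (- L)) * expR (- L) ^+ m / (size (netk F nF L (2 * m)))%:R).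

Definition xsh (X : Type) (h : seq (X * R)) (x : X) (i : nat) : X :=
  if (i < size h)%N then (nth (x, 0) h i).1 else x.
Definition ysh (X : Type) (h : seq (X * R)) (x : X) (i : nat) : R := (nth (x, 0) h i).2.
Definition strat_of (X : Type) (a : Alg X) (h : seq (X * R)) (x : X) : R :=
  mu a (xsh h x) (ysh h x) (size h).

Lemma forecast_mu (X : topologicalType) (a : Alg X) xs ys n :
  forecast (strat_of a) xs ys n = mu a xs ys n.
Proof.
rewrite /forecast /strat_of size_map size_iota; symmetry; apply: mu_ext.
- move=> s hs; rewrite /xsh size_map size_iota; case: ltnP => h.
    by rewrite (nth_map 0) ?size_iota // nth_iota.
  by have -> : s = n by apply/eqP; rewrite eqn_leq hs h.
- by move=> s hs; rewrite /ysh (nth_map 0) ?size_iota // nth_iota.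
Qed.
Lemma ln2_le1 : ln (2%:R : R) <= 1.
Proof.
rewrite -[X in _ <= X](expRK 1) ler_ln ?posrE ?expR_gt0 ?ltr0n //.
by have := expR_ge1Dx (1 : R); rewrite -natr1 addrC.
Qed.

Theorem corollary2 :
  exists C : R,
  forall (X : topologicalType) (F : set (X -> R)) (nF : (X -> R) -> R),
    [set: X] !=set0 ->
    banach_subspace F nF ->
    (0 < entropy_exponent F nF < +oo)%E ->
    exists strat : seq (X * R) -> X -> R,
      forall f, F f ->
        exists N0 : nat, forall N : nat, (N0 <= N)%N ->
          forall (xs : nat -> X) (ys : nat -> R),
            (forall n, -1 <= ys n <= 1) ->
            \sum_(0 <= n < N) (ys n - forecast strat xs ys n) ^+ 2
              <= \sum_(0 <= n < N) (ys n - f (xs n)) ^+ 2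
                 + C * fine (entropy_exponent F nF) * log2 N%:R.
Proof.
exists 300%:R => X F nF hne hB hL.
have [L [hEL L0]] : exists L, entropy_exponent F nF = L%:E /\ 0 < L.
  move: hL; case: (entropy_exponent F nF) => [l| |].
  - by rewrite lte_fin => /andP[h _]; exists l.
  - by rewrite ltxx andbF.
  - by [].
have hE2 : (entropy_exponent F nF < (2 * L)%:E)%E by rewrite hEL lte_fin; lra.
have [k0 hk0] := net_exists L0 hE2.
rewrite hEL /=.
set a := mkalg F nF L.
exists (strat_of a) => f hf.
set q := expR (- L).
have q0 : 0 < q by exact: expR_gt0.
have q1 : q < 1 by rewrite /q -exp.expR0 ltr_expR; lra.
set K := 168%:R * L + 8%:R - 32%:R * ln (1 - q).
set M := maxn (maxn k0 (Num.truncn (nF f)).+1) (Num.truncn (K / (136%:R * L))).+1.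
exists (2 ^ M)%N => N hN xs ys hy.
under eq_bigr => n _ do rewrite forecast_mu.
have ok : alg_ok a.
  split => [m i|m i x]; last exact: clip_bnd.
  rewrite /= divr_ge0 // mulr_ge0 ?exprn_ge0 ?expR_ge0 //; rewrite -/q; lra.
have hpr : forall G', \sum_(p <- idx (a_sz a) G') a_pri a p.1 p.2 <= 1.
  move=> G'; apply: prior_sum; rewrite -/q; apply/andP; split; lra.
have hBm : {homo a_B a : s t / (s <= t)%N >-> (s <= t)%N}.
  move=> s t hst; apply: le_truncn; rewrite ler_pM2r ?invr_gt0 // ler_nat //.
set t := trunc_log 2 N.
set m := t.+1.
have N0 : (0 < N)%N by apply: leq_trans hN; rewrite expn_gt0.
have htM : (M <= t)%N by apply: trunc_log_max.
have hNm : (N < 2 ^ m)%N by apply: trunc_log_ltn.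
have h2t : (2 ^ t <= N)%N by apply: trunc_logP.
have tlog : t%:R <= log2 N%:R.
  rewrite /log2 ler_pdivlMr ?ln2_gt0 //.
  rewrite mulr_natl -lnXn ?ltr0n // ler_ln ?posrE ?exprn_gt0 ?ltr0n // -natrX ler_nat //.
have hm2 : (k0 <= 2 * m)%N.
  apply: leq_trans (leq_trans (leq_maxl _ _) (leq_maxl _ _)) _.
  apply: leq_trans htM _; rewrite /m; lia.
have [hnet hsz] := netk_spec (hk0 _ hm2).
set s := netk F nF L (2 * m) in hnet hsz.
have p2m : 0 < (2%:R : R) ^+ m by rewrite exprn_gt0 ?ltr0n.
have [hBF [hB0 [hBadd hBsc]] [hn0 [hnsc hntri]] hBc] := hB.
have hnf : nF f <= 2%:R ^+ m.
  apply: ltW; apply: lt_le_trans (truncnS_gt _) _.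
  rewrite -natrX ler_nat.
  apply: leq_trans (ltnW (ltn_expl m (isT : (1 < 2)%N))).
  apply: leq_trans (leq_trans (leq_maxr _ _) (leq_maxl _ _)) _.
  apply: leq_trans htM _; rewrite /m; lia.
set f' := fun x => (2%:R ^+ m)^-1 * f x.
have hf' : unit_ball F nF f'.
  split; first exact: hBsc.
  rewrite /f' hnsc // ger0_norm; last by rewrite invr_ge0 ltW.
  by rewrite ler_pdivrMl // mulr1.
have [g gs hg] := hnet.2 f' hf'.
set i := index g s.
have hi : (i < size s)%N by rewrite index_mem.
have hgi : nth (fun _ => 0) s i = g by rewrite nth_index.
set G := maxn (a_B a N) m.+1.
have hszp : 0 < (size s)%:R :> R by rewrite ltr0n; apply: leq_ltn_trans hi.
have hpri : 0 < a_pri a m i.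
  by rewrite /= divr_gt0 // mulr_gt0 ?exprn_gt0 // -/q; lra.
have R1 := regret xs ok hy hpr hBm (leq_maxl _ _ : (a_B a N <= G)%N) (leq_maxr _ _ : (m < G)%N) hi hpri.
have hx : forall x, `|2%:R ^+ m * g x - f x| <= (2%:R ^+ m)^-1.
  move=> x; have := hg x; rewrite /f' /epsk.
  have -> : 2%:R ^+ m * g x - f x = 2%:R ^+ m * (g x - (2%:R ^+ m)^-1 * f x).
    by field; rewrite gt_eqF.
  rewrite normrM (ger0_norm (ltW p2m)) distrC => h.
  apply: le_trans (ler_wpM2l (ltW p2m) h) _.
  by rewrite mulnC exprM expr2 invfM mulrA divff ?mul1r // gt_eqF.
have E1 : \sum_(0 <= n < N) (ys n - a_E a m i (xs n)) ^+ 2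
    <= \sum_(0 <= n < N) (ys n - f (xs n)) ^+ 2 + 4%:R.
  apply: (@le_trans _ _ (\sum_(0 <= n < N) ((ys n - f (xs n)) ^+ 2 + 4%:R * (2%:R ^+ m)^-1))).
    apply: ler_sum => n _; rewrite /= hgi.
    apply: le_trans (clip_diff (2%:R ^+ m * g (xs n)) (f (xs n)) (hy n)) _.
    apply: lerD; first exact: clip_sq (hy n).
    by rewrite ler_pM2l ?ltr0n.
  rewrite big_split /= sumr_const_nat subn0 lerD2l.
  rewrite -(mulr_natr (4%:R * (2%:R ^+ m)^-1) N) -mulrA.
  have hN2 : (N%:R : R) <= 2%:R ^+ m by rewrite -natrX ler_nat ltnW.
  have : ((2%:R : R) ^+ m)^-1 * N%:R <= 1 by rewrite -(ler_pM2l p2m) mulrA divff ?gt_eqF // mul1r mulr1.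
  move=> h; rewrite -[X in _ <= X]mulr1; apply: ler_wpM2l => //; rewrite ler0n.
have E2 : \sum_(0 <= n < N) (if (m < a_B a n)%N then 0 else 1 : R) <= L * m%:R + L + 1.
  have hx0 : 0 <= L * m.+1%:R by apply: mulr_ge0; [exact: ltW | exact: ler0n].
  apply: (@le_trans _ _ (L * m.+1%:R + 1)); last by rewrite -natr1; lra.
  apply: le_trans (count_lt N hx0).
  apply: ler_sum => n _; case: ifP => h; first by case: ifP.
  have : (a_B a n <= m)%N by rewrite leqNgt h.
  rewrite /= truncn_le_nat ltr_pdivrMr // => h'.
  by rewrite mulrC h'.
have E3 : - ln (a_pri a m i) / eta <= 32%:R * (5%:R * L * m%:R - ln (1 - q)).
  have hq1 : 0 < 1 - q by lra.
  rewrite /= lnM ?posrE ?mulr_gt0 ?exprn_gt0 ?invr_gt0 // lnV ?posrE //.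
  rewrite lnM ?posrE ?exprn_gt0 // lnXn // /q expRK -/q.
  rewrite /eta invrK.
  have hln : ln (size s)%:R <= 4%:R * L * m%:R.
    apply: le_trans hsz _; rewrite natrM.
    have := ln2_le1; have := ln2_gt0; have : 0 <= L * m%:R by apply: mulr_ge0; [exact: ltW | exact: ler0n].
    nra.
  rewrite -/s mulNrn -(mulr_natr L m); move: hln; lra.
have hmt : m%:R = t%:R + 1 :> R by rewrite natr1.
have hKt : K <= 136%:R * L * t%:R.
  have : ((Num.truncn (K / (136%:R * L))).+1 <= t)%N by apply: leq_trans htM; exact: leq_maxr.
  rewrite -(ler_nat R) => h1.
  have h2 := truncnS_gt (K / (136%:R * L)).
  have h3 : K / (136%:R * L) < t%:R by apply: lt_le_trans h2 h1.
  rewrite ltr_pdivrMr ?mulr_gt0 ?ltr0n // in h3; rewrite mulrC; lra.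
have hLt : L * t%:R <= L * log2 N%:R by rewrite ler_pM2l.
have ht0 : 0 <= L * t%:R by apply: mulr_ge0; [exact: ltW | exact: ler0n].
move: R1 E1 E2 E3 hKt; rewrite hmt /K.
lra.
Qed.
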